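(* Let $X,Y$ be nonempty compact Hausdorff spaces, $E\neq\{0_E\}$ a complex locally convex space, and $T:C(X,E)\to C(Y,E)$ a map with $\operatorname{Ran}(TF-TG)\subset\operatorname{Ran}(F-G)$ for all $F,G\in C(X,E)$ and $T(1\otimes 0_E)=1\otimes 0_E$. Then $\tilde T_u=\tilde T_v$ for all $u,v\in E\setminus\{0_E\}$.
   Context: $C(X,E)$ is the vector space of continuous functions $X\to E$; $\operatorname{Ran}(F)=\{F(x):x\in X\}$; $f\otimes u$ denotes $x\mapsto f(x)u$, and $1\otimes 0_E$ is the constant function $0_E$. For $u\in E\setminus\{0_E\}$, $\tilde T_u:C(X)\to C(Y)$ is defined by: $\tilde T_u f$ is the unique function $Y\to\mathbb{C}$ with $T(f\otimes u)(y)=(\tilde T_uf)(y)u$ for all $y\in Y$ (it exists since $\operatorname{Ran}(T(f\otimes u))\subset\operatorname{Ran}(f)u$, and it is continuous). *)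

(* Defs.v *)
From Stdlib Require Import Reals.
Open Scope R_scope.

Record Cplx := mkC { Re : R ; Im : R }.
Definition C0 : Cplx := mkC 0 0.
Definition C1 : Cplx := mkC 1 0.
Definition Cadd (a b : Cplx) : Cplx := mkC (Re a + Re b) (Im a + Im b).
Definition Copp (a : Cplx) : Cplx := mkC (- Re a) (- Im a).
Definition Csub (a b : Cplx) : Cplx := Cadd a (Copp b).
Definition Cmul (a b : Cplx) : Cplx :=
  mkC (Re a * Re b - Im a * Im b) (Re a * Im b + Im a * Re b).
Definition Cnorm (a : Cplx) : R := sqrt (Re a * Re a + Im a * Im a).

Record TopSpace := {
  pt :> Type ;
  is_open : (pt -> Prop) -> Prop ;
  open_full : is_open (fun _ => True) ;
  open_inter : forall U V, is_open U -> is_open V ->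
                 is_open (fun x => U x /\ V x) ;
  open_union : forall (I : Type) (U : I -> pt -> Prop),
                 (forall i, is_open (U i)) -> is_open (fun x => exists i, U i x)
}.

Definition top_compact (X : TopSpace) : Prop :=
  forall (I : Type) (U : I -> X -> Prop),
    (forall i, is_open X (U i)) ->
    (forall x, exists i, U i x) ->
    exists l : list I, forall x, exists i, List.In i l /\ U i x.

Definition top_hausdorff (X : TopSpace) : Prop :=
  forall x y : X, x <> y ->
    exists U V, is_open X U /\ is_open X V /\ U x /\ V y /\
                (forall z, U z -> V z -> False).

(* ---------- Complex (Hausdorff) locally convex spaces ----------
   A complex vector space whose topology is induced by a separating
   family of seminorms. *)
Record LCS := {
  vec :> Type ;
  vzero : vec ;
  vadd : vec -> vec -> vec ;
  vopp : vec -> vec ;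
  vscal : Cplx -> vec -> vec ;
  vadd_assoc : forall a b c, vadd a (vadd b c) = vadd (vadd a b) c ;
  vadd_comm : forall a b, vadd a b = vadd b a ;
  vadd_0 : forall a, vadd a vzero = a ;
  vadd_opp : forall a, vadd a (vopp a) = vzero ;
  vscal_assoc : forall s t a, vscal s (vscal t a) = vscal (Cmul s t) a ;
  vscal_1 : forall a, vscal C1 a = a ;
  vscal_distr_v : forall s a b, vscal s (vadd a b) = vadd (vscal s a) (vscal s b) ;
  vscal_distr_s : forall s t a, vscal (Cadd s t) a = vadd (vscal s a) (vscal t a) ;
  sn_index : Type ;
  sn : sn_index -> vec -> R ;
  sn_triangle : forall i a b, sn i (vadd a b) <= sn i a + sn i b ;
  sn_homog : forall i s a, sn i (vscal s a) = Cnorm s * sn i a ;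
  sn_separating : forall a, (forall i, sn i a = 0) -> a = vzero
}.

Arguments vzero {_}.
Arguments vadd {_} _ _.
Arguments vopp {_} _.
Arguments vscal {_} _ _.

Definition vsub {E : LCS} (a b : E) : E := vadd a (vopp b).

Definition cont_C (X : TopSpace) (f : X -> Cplx) : Prop :=
  forall (x : X) (eps : R), 0 < eps ->
    exists U, is_open X U /\ U x /\
      forall x', U x' -> Cnorm (Csub (f x') (f x)) < eps.

(* continuity of X -> E for the locally convex topology of E
   (initial topology of the seminorms) *)
Definition cont_E (X : TopSpace) (E : LCS) (F : X -> E) : Prop :=
  forall (x : X) (i : sn_index E) (eps : R), 0 < eps ->
    exists U, is_open X U /\ U x /\
      forall x', U x' -> sn E i (vsub (F x') (F x)) < eps.

Definition CX (X : TopSpace) := { f : X -> Cplx | cont_C X f }.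
Definition CXE (X : TopSpace) (E : LCS) := { F : X -> E | cont_E X E F }.

Definition Ran {A B : Type} (F : A -> B) : B -> Prop := fun b => exists a, F a = b.

Definition subset {B : Type} (P Q : B -> Prop) : Prop := forall b, P b -> Q b.

(* Main.v *)
Require Import Defs.
From Stdlib Require Import Reals Lra Psatz Classical ClassicalEpsilon.
Open Scope R_scope.

Lemma Cext (a b : Cplx) : Re a = Re b -> Im a = Im b -> a = b.
Proof. destruct a, b; simpl; intros; subst; reflexivity. Qed.

Lemma vadd_0l (E : LCS) (a : E) : vadd vzero a = a.
Proof. rewrite vadd_comm. apply vadd_0. Qed.

Lemma vopp_l (E : LCS) (a : E) : vadd (vopp a) a = vzero.
Proof. rewrite vadd_comm. apply vadd_opp. Qed.

Lemma vadd_cancel_r (E : LCS) (a b c : E) : vadd a c = vadd b c -> a = b.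
Proof.
  intro H. rewrite <- (vadd_0 E a), <- (vadd_0 E b), <- (vadd_opp E c), !vadd_assoc, H.
  reflexivity.
Qed.

Lemma vscal_C0 (E : LCS) (a : E) : vscal C0 a = vzero.
Proof.
  apply (vadd_cancel_r E _ _ (vscal C0 a)). rewrite vadd_0l, <- vscal_distr_s.
  f_equal. apply Cext; unfold C0; simpl; ring.
Qed.

Lemma vopp_0 (E : LCS) : vopp (@vzero E) = vzero.
Proof. apply (vadd_cancel_r E _ _ vzero). rewrite vopp_l, vadd_0. reflexivity. Qed.

Lemma vsub_0r (E : LCS) (a : E) : vsub a vzero = a.
Proof. unfold vsub. rewrite vopp_0. apply vadd_0. Qed.

Lemma vsub_eq0 (E : LCS) (a b : E) : vsub a b = vzero -> a = b.
Proof.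
  unfold vsub. intro H. apply (vadd_cancel_r E _ _ (vopp b)). rewrite H, vadd_opp. reflexivity.
Qed.

Lemma vsub_self (E : LCS) (a : E) : vsub a a = vzero.
Proof. apply vadd_opp. Qed.

Lemma vsub_scal (E : LCS) (c d : Cplx) (w : E) :
  vsub (vscal c w) (vscal d w) = vscal (Csub c d) w.
Proof.
  unfold vsub.
  assert (Hc : vscal c w = vadd (vscal (Csub c d) w) (vscal d w)).
  { rewrite <- vscal_distr_s. f_equal. apply Cext; simpl; ring. }
  rewrite Hc, <- vadd_assoc, vadd_opp, vadd_0. reflexivity.
Qed.

Lemma sn_zero (E : LCS) i : sn E i vzero = 0.
Proof.
  assert (H : vzero = vscal C0 (@vzero E)) by (symmetry; apply vscal_C0).
  rewrite H at 1. rewrite sn_homog. unfold Cnorm, C0; simpl.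
  rewrite Rmult_0_l, Rplus_0_l, sqrt_0. ring.
Qed.

Lemma Cnorm0 e : Cnorm e = 0 -> Re e = 0 /\ Im e = 0.
Proof.
  unfold Cnorm. intro H. apply sqrt_eq_0 in H; [split; nra | nra].
Qed.

Lemma scal_inj (E : LCS) (w : E) c d : w <> vzero -> vscal c w = vscal d w -> c = d.
Proof.
  intros Hw H.
  assert (H0 : vscal (Csub c d) w = vzero).
  { rewrite <- vsub_scal, H. apply vadd_opp. }
  destruct (Req_dec (Cnorm (Csub c d)) 0) as [Hn|Hn].
  - apply Cnorm0 in Hn. simpl in Hn. destruct Hn. apply Cext; lra.
  - exfalso. apply Hw. apply sn_separating. intro i.
    assert (Hs := sn_homog E i (Csub c d) w). rewrite H0, sn_zero in Hs.
    symmetry in Hs. apply Rmult_integral in Hs. destruct Hs; [contradiction|assumption].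
Qed.

Lemma swap4 (E : LCS) (a b c d : E) :
  vadd (vadd a b) (vadd c d) = vadd (vadd c b) (vadd a d).
Proof.
  rewrite !vadd_assoc. f_equal.
  rewrite (vadd_comm _ (vadd a b) c), (vadd_comm _ a b), vadd_assoc. reflexivity.
Qed.

Lemma vsub_swap (E : LCS) (p q p' q' : E) :
  vsub p q = vsub p' q' -> vsub p p' = vsub q q'.
Proof.
  intro H. unfold vsub in *. apply (vadd_cancel_r E _ _ (vadd p' q)).
  transitivity (vadd p q).
  - rewrite <- vadd_assoc. rewrite (vadd_assoc _ (vopp p') p' q), vopp_l, vadd_0l.
    reflexivity.
  - symmetry. rewrite (swap4 E q (vopp q') p' q). rewrite <- H.
    rewrite <- vadd_assoc. rewrite (vadd_assoc _ (vopp q) q q), vopp_l, vadd_0l.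
    reflexivity.
Qed.

Definition Cinv (z : Cplx) : Cplx :=
  mkC (Re z / (Re z * Re z + Im z * Im z)) (- Im z / (Re z * Re z + Im z * Im z)).

Lemma Cinv_l z : z <> C0 -> Cmul (Cinv z) z = Defs.C1.
Proof.
  destruct z as [p q]. intro Hz.
  assert (Hn : p * p + q * q <> 0).
  { intro H0. apply Hz. unfold C0. assert (p = 0) by nra. assert (q = 0) by nra. subst; reflexivity. }
  apply Cext; unfold Defs.C1, Cinv; simpl; field; exact Hn.
Qed.

Lemma Rabs_Re_le z : Rabs (Re z) <= Cnorm z.
Proof.
  unfold Cnorm. rewrite <- sqrt_Rsqr_abs. apply sqrt_le_1_alt. unfold Rsqr. nra.
Qed.

Lemma Rabs_Im_le z : Rabs (Im z) <= Cnorm z.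
Proof.
  unfold Cnorm. rewrite <- sqrt_Rsqr_abs. apply sqrt_le_1_alt. unfold Rsqr. nra.
Qed.

Lemma Cnorm_le z : Cnorm z <= Rabs (Re z) + Rabs (Im z).
Proof.
  unfold Cnorm. pose proof (Rabs_pos (Re z)); pose proof (Rabs_pos (Im z)).
  rewrite <- (sqrt_square (Rabs (Re z) + Rabs (Im z))) by lra. apply sqrt_le_1_alt.
  assert (Rabs (Re z) * Rabs (Re z) = Re z * Re z) by (rewrite <- Rabs_mult; apply Rabs_right; nra).
  assert (Rabs (Im z) * Rabs (Im z) = Im z * Im z) by (rewrite <- Rabs_mult; apply Rabs_right; nra).
  nra.
Qed.

Definition hh {X : Type} (f : X -> Cplx) (A B : Cplx) (x : X) : Cplx :=
  mkC (Re A * Re (f x) + Re B * Im (f x)) (Im A * Re (f x) + Im B * Im (f x)).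

Lemma cont_hh (X : TopSpace) (f : X -> Cplx) A B : cont_C X f -> cont_C X (hh f A B).
Proof.
  intros Hf x eps Heps.
  set (M := Rabs (Re A) + Rabs (Im A) + Rabs (Re B) + Rabs (Im B)).
  assert (HM : 0 <= M).
  { unfold M. pose proof (Rabs_pos (Re A)); pose proof (Rabs_pos (Im A));
    pose proof (Rabs_pos (Re B)); pose proof (Rabs_pos (Im B)); lra. }
  assert (He' : 0 < eps / (M + 1)) by (apply Rdiv_lt_0_compat; lra).
  destruct (Hf x _ He') as [U [HU [Hx HUf]]].
  exists U; split; [exact HU | split; [exact Hx|]].
  intros x' Hx'. specialize (HUf x' Hx').
  set (N := Cnorm (Csub (f x') (f x))) in *.
  set (dr := Re (f x') - Re (f x)). set (ds := Im (f x') - Im (f x)).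
  assert (Hdr : Rabs dr <= N).
  { replace dr with (Re (Csub (f x') (f x))) by (unfold dr; simpl; ring). apply Rabs_Re_le. }
  assert (Hds : Rabs ds <= N).
  { replace ds with (Im (Csub (f x') (f x))) by (unfold ds; simpl; ring). apply Rabs_Im_le. }
  assert (B1 : Rabs (Re A * dr + Re B * ds) <= Rabs (Re A) * N + Rabs (Re B) * N).
  { eapply Rle_trans. apply Rabs_triang. rewrite !Rabs_mult.
    apply Rplus_le_compat; apply Rmult_le_compat_l; auto using Rabs_pos. }
  assert (B2 : Rabs (Im A * dr + Im B * ds) <= Rabs (Im A) * N + Rabs (Im B) * N).
  { eapply Rle_trans. apply Rabs_triang. rewrite !Rabs_mult.
    apply Rplus_le_compat; apply Rmult_le_compat_l; auto using Rabs_pos. }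
  assert (HC := Cnorm_le (Csub (hh f A B x') (hh f A B x))).
  replace (Re (Csub (hh f A B x') (hh f A B x))) with (Re A * dr + Re B * ds) in HC
    by (unfold hh, dr, ds; simpl; ring).
  replace (Im (Csub (hh f A B x') (hh f A B x))) with (Im A * dr + Im B * ds) in HC
    by (unfold hh, dr, ds; simpl; ring).
  assert (Hfin : M * N <= M * (eps / (M + 1))) by (apply Rmult_le_compat_l; lra).
  assert (Hfin2 : M * (eps / (M + 1)) < eps).
  { replace eps with (eps / (M + 1) * (M + 1)) at 2 by (field; lra). nra. }
  unfold M in *. lra.
Qed.

Lemma contE_scal (X : TopSpace) (E : LCS) (k : X -> Cplx) (w : E) :
  cont_C X k -> cont_E X E (fun x => vscal (k x) w).
Proof.
  intros Hk x i eps Heps.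
  set (s := sn E i w).
  pose proof (Rabs_pos s).
  assert (He' : 0 < eps / (Rabs s + 1)) by (apply Rdiv_lt_0_compat; lra).
  destruct (Hk x _ He') as [U [HU [Hx HUf]]].
  exists U; split; [exact HU | split; [exact Hx|]].
  intros x' Hx'. specialize (HUf x' Hx').
  rewrite vsub_scal, sn_homog. fold s.
  pose proof (Cnorm_nonneg := sqrt_pos (Re (Csub (k x') (k x)) * Re (Csub (k x') (k x)) + Im (Csub (k x') (k x)) * Im (Csub (k x') (k x)))).
  fold (Cnorm (Csub (k x') (k x))) in Cnorm_nonneg.
  pose proof (Rle_abs s).
  assert (Cnorm (Csub (k x') (k x)) * s <= Cnorm (Csub (k x') (k x)) * Rabs s)
    by (apply Rmult_le_compat_l; lra).
  assert (Cnorm (Csub (k x') (k x)) * Rabs s <= eps / (Rabs s + 1) * Rabs s)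
    by (apply Rmult_le_compat_r; lra).
  assert (eps / (Rabs s + 1) * Rabs s < eps).
  { replace eps with (eps / (Rabs s + 1) * (Rabs s + 1)) at 2 by (field; lra). nra. }
  lra.
Qed.

Lemma contZ (X : TopSpace) (E : LCS) : cont_E X E (fun _ => vzero).
Proof.
  intros x i eps Heps. exists (fun _ => True).
  split; [apply open_full | split; [exact I|]].
  intros. rewrite vsub_self, sn_zero. lra.
Qed.

Lemma aff1 (Q : Cplx -> Cplx -> Prop)
 (tot : forall t, exists c, Q t c)
 (dif : forall t s c d, Q t c -> Q s d -> exists r,
     Re c - Re d = (Re t - Re s) * r /\ Im c - Im d = (Im t - Im s) * r) :
 exists rho c0, Q C0 c0 /\ forall t c, Q t c ->
   Re c = Re c0 + Re t * rho /\ Im c = Im c0 + Im t * rho.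
Proof.
  destruct (tot C0) as [c0 H0]. destruct (tot (mkC 1 0)) as [c1 H1].
  destruct (tot (mkC 0 1)) as [ci Hi].
  destruct (dif _ _ _ _ H1 H0) as [r1 [E1 E2]].
  destruct (dif _ _ _ _ Hi H0) as [ri [E3 E4]].
  destruct (dif _ _ _ _ Hi H1) as [r' [E5 E6]].
  exists r1, c0. split; [exact H0|]. intros t c Ht.
  destruct (dif _ _ _ _ Ht H0) as [rt [F1 F2]].
  destruct (dif _ _ _ _ Ht Hi) as [r2 [F3 F4]].
  destruct (dif _ _ _ _ Ht H1) as [r3 [F5 F6]].
  unfold C0 in *; simpl in *.
  assert (r' = r1) by lra. assert (ri = r1) by lra.
  destruct (Req_dec (Im t) 0) as [Ht2|Ht2].
  - destruct (Req_dec (Re t) 0) as [Ht1|Ht1].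
    + rewrite Ht1, Ht2 in *. lra.
    + assert (rt = r2). { apply (Rmult_eq_reg_l (Re t)); [nra|exact Ht1]. }
      assert (r2 = r1). { rewrite Ht2 in *. lra. }
      subst. split; nra.
  - assert (rt = r3). { apply (Rmult_eq_reg_l (Im t)); [nra|exact Ht2]. }
    assert (r3 = r1). { subst. nra. }
    subst. split; nra.
Qed.

Lemma lin2 (P : Cplx -> Cplx -> Cplx -> Prop)
 (tot : forall A B, exists c, P A B c)
 (dif : forall A B A' B' c c', P A B c -> P A' B' c' -> exists r s,
    Re c - Re c' = (Re A - Re A') * r + (Re B - Re B') * s /\
    Im c - Im c' = (Im A - Im A') * r + (Im B - Im B') * s)
 (P00 : P C0 C0 C0) (l1 l2 : R) (hl : l1 * l1 + l2 * l2 <> 0) c1 c2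
 (H1 : P (mkC 1 0) (mkC 0 1) c1) (H2 : P (mkC l1 l2) (mkC (-l2) l1) c2) :
 Re c2 = l1 * Re c1 - l2 * Im c1 /\ Im c2 = l1 * Im c1 + l2 * Re c1.
Proof.
  assert (affA : forall B, exists rho c0, P C0 B c0 /\ forall t c, P t B c ->
     Re c = Re c0 + Re t * rho /\ Im c = Im c0 + Im t * rho).
  { intro B. apply (aff1 (fun t c => P t B c)). intro t; apply tot.
    intros t s c d Ht Hs. destruct (dif _ _ _ _ _ _ Ht Hs) as [r [s' [G1 G2]]].
    exists r. split; [rewrite G1|rewrite G2]; ring. }
  assert (affB : forall A, exists rho c0, P A C0 c0 /\ forall t c, P A t c ->
     Re c = Re c0 + Re t * rho /\ Im c = Im c0 + Im t * rho).
  { intro A. apply (aff1 (fun t c => P A t c)). intro t; apply tot.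
    intros t s c d Ht Hs. destruct (dif _ _ _ _ _ _ Ht Hs) as [r [s' [G1 G2]]].
    exists s'. split; [rewrite G1|rewrite G2]; ring. }
  destruct (affA C0) as [rho0 [e0 [He0 FA0]]].
  destruct (affA (mkC 0 1)) as [rhoi [ei [Hei FAi]]].
  destruct (affA (mkC (-l2) l1)) as [rhol [el [Hel FAl]]].
  destruct (affB C0) as [k0 [d0 [Hd0 FB0]]].
  destruct (affB (mkC 1 0)) as [k1 [d1 [Hd1 FB1]]].
  destruct (affB (mkC l1 l2)) as [kl [dl [Hdl FBl]]].
  pose proof (FA0 _ _ P00) as Q1. pose proof (FB0 _ _ P00) as Q2.
  pose proof (FA0 _ _ Hd1) as Q3. pose proof (FA0 _ _ Hdl) as Q4.
  pose proof (FB0 _ _ Hei) as Q5. pose proof (FB0 _ _ Hel) as Q6.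
  pose proof (FAi _ _ H1) as Q7. pose proof (FB1 _ _ H1) as Q8.
  pose proof (FAl _ _ H2) as Q9. pose proof (FBl _ _ H2) as Q10.
  unfold C0 in *; simpl in *.
  destruct Q1, Q2, Q3, Q4, Q5, Q6, Q7, Q8, Q9, Q10.
  assert (Ea : l1 * (rhol - rho0) + l2 * (kl - k0) = 0) by nra.
  assert (Eb : l2 * (rhol - rho0) - l1 * (kl - k0) = 0) by nra.
  assert (Ek : (l1 * l1 + l2 * l2) * (kl - k0) = 0).
  { replace ((l1 * l1 + l2 * l2) * (kl - k0)) with
      (l2 * (l1 * (rhol - rho0) + l2 * (kl - k0)) - l1 * (l2 * (rhol - rho0) - l1 * (kl - k0))) by ring.
    rewrite Ea, Eb. ring. }
  apply Rmult_integral in Ek. destruct Ek as [Ek|Ek]; [contradiction|].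
  assert (kl = k0) by lra. subst kl.
  split; nra.
Qed.

Theorem lemma4p5
  (X Y : TopSpace) (E : LCS)
  (hXc : top_compact X) (hXh : top_hausdorff X) (hXne : inhabited X)
  (hYc : top_compact Y) (hYh : top_hausdorff Y) (hYne : inhabited Y)
  (hE : exists e : E, e <> vzero)
  (T : CXE X E -> CXE Y E)
  (hRan : forall F G : CXE X E,
      subset (Ran (fun y => vsub (proj1_sig (T F) y) (proj1_sig (T G) y)))
             (Ran (fun x => vsub (proj1_sig F x) (proj1_sig G x))))
  (hT0 : forall Z : CXE X E, (forall x, proj1_sig Z x = vzero) ->
           forall y, proj1_sig (T Z) y = vzero) :
  forall (u v : E), u <> vzero -> v <> vzero ->
  forall (f : CX X) (Fu Fv : CXE X E),
    (forall x, proj1_sig Fu x = vscal (proj1_sig f x) u) ->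
    (forall x, proj1_sig Fv x = vscal (proj1_sig f x) v) ->
    exists g : Y -> Cplx,
      forall y, proj1_sig (T Fu) y = vscal (g y) u /\
                proj1_sig (T Fv) y = vscal (g y) v.
Proof.
  intros u v hu hv f Fu Fv HFu HFv.
  set (Z0 := exist (fun F => cont_E X E F) (fun _ : X => @vzero E) (contZ X E) : CXE X E).
  assert (TZ : forall y, proj1_sig (T Z0) y = vzero) by (apply hT0; intro; reflexivity).
  assert (getd : forall F G y, exists x, vsub (proj1_sig F x) (proj1_sig G x) =
                 vsub (proj1_sig (T F) y) (proj1_sig (T G) y)).
  { intros F G y. exact (hRan F G (vsub (proj1_sig (T F) y) (proj1_sig (T G) y))
                          (ex_intro _ y eq_refl)). }
  assert (getv : forall F y, exists x, proj1_sig (T F) y = proj1_sig F x).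
  { intros F y. destruct (getd F Z0 y) as [x Hx]. exists x.
    rewrite TZ in Hx. simpl in Hx. rewrite !vsub_0r in Hx. symmetry; exact Hx. }
  assert (same : forall F G, (forall x, proj1_sig F x = proj1_sig G x) ->
            forall y, proj1_sig (T F) y = proj1_sig (T G) y).
  { intros F G H y. destruct (getd F G y) as [x Hx]. rewrite H, vsub_self in Hx.
    apply vsub_eq0. auto. }
  cut (forall y, exists c, proj1_sig (T Fu) y = vscal c u /\ proj1_sig (T Fv) y = vscal c v).
  { intro Hc. exists (fun y => proj1_sig (constructive_indefinite_description _ (Hc y))).
    intro y. exact (proj2_sig (constructive_indefinite_description _ (Hc y))). }
  intro y.
  destruct (classic (exists l, v = vscal l u)) as [[l Hl]|Hind].
  - destruct l as [l1 l2].
    assert (hl : l1 * l1 + l2 * l2 <> 0).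
    { intro H0. apply hv. assert (l1 = 0) by nra. assert (l2 = 0) by nra. subst l1 l2.
      rewrite Hl. apply vscal_C0. }
    set (HH := fun A B => exist (fun F => cont_E X E F)
                 (fun x => vscal (hh (proj1_sig f) A B x) u)
                 (contE_scal X E _ u (cont_hh X _ A B (proj2_sig f))) : CXE X E).
    set (P := fun A B c => proj1_sig (T (HH A B)) y = vscal c u).
    assert (tot : forall A B, exists c, P A B c).
    { intros A B. destruct (getv (HH A B) y) as [x Hx].
      exists (hh (proj1_sig f) A B x). exact Hx. }
    assert (dif : forall A B A' B' c c', P A B c -> P A' B' c' -> exists r s,
      Re c - Re c' = (Re A - Re A') * r + (Re B - Re B') * s /\
      Im c - Im c' = (Im A - Im A') * r + (Im B - Im B') * s).
    { intros A B A' B' c c' Hc Hc'. destruct (getd (HH A B) (HH A' B') y) as [x Hx].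
      unfold P in Hc, Hc'. rewrite Hc, Hc' in Hx. simpl in Hx.
      rewrite !vsub_scal in Hx. apply scal_inj in Hx; [|exact hu].
      exists (Re (proj1_sig f x)), (Im (proj1_sig f x)).
      assert (R1 := f_equal Re Hx). assert (R2 := f_equal Im Hx).
      unfold hh in R1, R2; simpl in R1, R2.
      split.
      - replace (Re c - Re c') with (Re c + - Re c') by ring. rewrite <- R1. ring.
      - replace (Im c - Im c') with (Im c + - Im c') by ring. rewrite <- R2. ring. }
    assert (P00 : P C0 C0 C0).
    { unfold P. rewrite hT0.
      - symmetry; apply vscal_C0.
      - intro x. simpl. replace (hh (proj1_sig f) C0 C0 x) with C0.
        + apply vscal_C0.
        + apply Cext; unfold hh, C0; simpl; ring. }
    destruct (tot (mkC 1 0) (mkC 0 1)) as [c1 H1].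
    destruct (tot (mkC l1 l2) (mkC (-l2) l1)) as [c2 H2].
    destruct (lin2 P tot dif P00 l1 l2 hl c1 c2 H1 H2) as [G1 G2].
    exists c1. split.
    + rewrite (same Fu (HH (mkC 1 0) (mkC 0 1))). exact H1.
      intro x. rewrite HFu. simpl. f_equal. apply Cext; unfold hh; simpl; ring.
    + rewrite (same Fv (HH (mkC l1 l2) (mkC (-l2) l1))).
      * unfold P in H2. rewrite H2, Hl, vscal_assoc. f_equal.
        apply Cext; simpl; [rewrite G1 | rewrite G2]; ring.
      * intro x. rewrite HFv, Hl, vscal_assoc. simpl. f_equal.
        apply Cext; unfold hh; simpl; ring.
  - destruct (getv Fu y) as [a Ha]. destruct (getv Fv y) as [b Hb].
    destruct (getd Fu Fv y) as [c Hc].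
    rewrite Ha, Hb, !HFu, !HFv in Hc.
    apply vsub_swap in Hc. rewrite !vsub_scal in Hc.
    set (al := Csub (proj1_sig f c) (proj1_sig f a)) in Hc.
    set (be := Csub (proj1_sig f c) (proj1_sig f b)) in Hc.
    assert (Hbe : be = C0).
    { apply NNPP. intro Hne. apply Hind. exists (Cmul (Cinv be) al).
      rewrite <- vscal_assoc, Hc, vscal_assoc, Cinv_l by exact Hne.
      symmetry; apply vscal_1. }
    assert (Hal : al = C0).
    { apply (scal_inj E u); [exact hu|]. rewrite Hc, Hbe, !vscal_C0. reflexivity. }
    assert (R1 := f_equal Re Hal). assert (R2 := f_equal Im Hal).
    assert (R3 := f_equal Re Hbe). assert (R4 := f_equal Im Hbe).
    unfold al, be, C0 in *; simpl in *.
    exists (proj1_sig f a). split.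
    + rewrite Ha, HFu. reflexivity.
    + rewrite Hb, HFv. f_equal. apply Cext; lra.
Qed.
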